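(* For $k\in\mathbb Z_{>0}$, $0\le l\le k$ and $N\ge1$, the number $p(k,l,N)$ of $ehf$-monomials of length $N$ equals $d^{(N)}_{k,l}(0)$.
   Context: An ordered monomial is a formal product $f_{n-1}^{a_{n-1}}h_{n-1}^{b_{n-1}}e_{n-1}^{c_{n-1}}\cdots e_2^{c_2}f_1^{a_1}h_1^{b_1}e_1^{c_1}f_0^{a_0}$ determined by its nonnegative integer exponents (set $a_i=b_i=c_i=0$ for $i\ge n$); it is an $ehf$-monomial (for given $k,l$) if (i) $a_i+a_{i+1}+b_{i+1}\le k$ for $i\ge0$; (ii) $a_i+b_{i+1}+c_{i+1}\le k$ for $i\ge0$; (iii) $a_i+b_i+c_{i+1}\le k$ for $i>0$; (iv) $b_i+c_i+c_{i+1}\le k$ for $i>0$; (v) $a_0\le l$, $c_1\le k-l$; it has length $N$ if $a_i=b_i=c_i=0$ for $i\ge N$. The level $k$ Verlinde algebra has basis $\pi_0,\dots,\pi_k$ with $\pi_l\pi_{l'}=\sum_i\pi_i$, sum over $|l-l'|\le i\le\min(2k-l-l',l+l')$, $i+l-l'$ even; $d^{(N)}_{k,l}(0)$ is defined by $(\pi_0+2\pi_1+\cdots+(k+1)\pi_k)^N=\sum_ld^{(N)}_{k,l}(0)\pi_l$. *)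

(* Defs.v *)
From mathcomp Require Import all_boot.
Set Implicit Arguments. Unset Strict Implicit. Unset Printing Implicit Defensive.

(* An exponent vector of length N: entries indexed by 0..N-1.  Every exponent
   of an ehf-monomial is <= k (by (i) for a_i, by (iv) for b_i and c_i), so
   exponents are taken in 'I_(k+1) without loss. *)
Definition expvec (k N : nat) := {ffun 'I_N -> 'I_k.+1}.

Definition ext (k N : nat) (f : expvec k N) (i : nat) : nat :=
  match @insub nat (fun j => j < N) 'I_N i with
  | Some j => val (f j)
  | None => 0
  end.

(* an ordered monomial of length N: exponents a_0..a_{N-1}, b_1..b_{N-1},
   c_1..c_{N-1}; the (nonexistent) b_0, c_0 slots are required to be 0. *)
Definition monomial (k N : nat) := (expvec k N * expvec k N * expvec k N)%type.

Definition is_ehf (k l N : nat) (m : monomial k N) : bool :=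
  let: (fa, fb, fc) := m in
  let a := ext fa in let b := ext fb in let c := ext fc in
  [&& b 0 == 0, c 0 == 0,
      (* (i), (ii) for 0 <= i (only i < N matters; beyond, all vanish) *)
      [forall i : 'I_N, a i + a i.+1 + b i.+1 <= k],
      [forall i : 'I_N, a i + b i.+1 + c i.+1 <= k],
      [forall i : 'I_N, (0 < i) ==> (a i + b i + c i.+1 <= k)],
      [forall i : 'I_N, (0 < i) ==> (b i + c i + c i.+1 <= k)],
      a 0 <= l & c 1 <= k - l].

Definition p_ehf (k l N : nat) : nat := #|[pred m : monomial k N | is_ehf l m]|.

(* elements: coefficient vectors on the basis pi_0..pi_k *)
Definition verl (k : nat) := 'I_k.+1 -> nat.

Definition fusion (k l l' i : nat) : bool :=
  [&& (l - l') + (l' - l) <= i, i <= minn (2 * k - l - l') (l + l')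
    & ~~ odd (i + l + l')].

Definition vmul (k : nat) (x y : verl k) : verl k :=
  fun i => \sum_(j < k.+1) \sum_(j' < k.+1) x j * y j' * fusion k j j' i.

(* x^N for N >= 1 *)
Definition vpow (k : nat) (x : verl k) (N : nat) : verl k :=
  iter N.-1 (vmul x) x.

Definition vsum (k : nat) : verl k := fun j => (val j).+1.

Definition d0 (k N : nat) (l : 'I_k.+1) : nat := vpow (@vsum k) N l.

Arguments p_ehf k l N : clear implicits.
Arguments d0 k N l : clear implicits.

(* Main.v *)
Require Import Defs.
From mathcomp Require Import all_boot zify.
Set Implicit Arguments. Unset Strict Implicit. Unset Printing Implicit Defensive.
Lemma sum_le_cnt K t : \sum_(i < K) (i <= t : nat) = minn K t.+1.
Proof.
elim: K => [|K IH]; first by rewrite big_ord0.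
rewrite big_ord_recr /= IH; case: leqP => H; lia.
Qed.

Lemma sum_pick K m (F : nat -> nat) : m < K -> \sum_(j < K) F j * (j == m :> nat) = F m.
Proof.
move=> Hm; rewrite (bigD1 (Ordinal Hm)) //= eqxx muln1 big1 ?addn0 // => j Hj.
suff /negbTE -> : (j != m :> nat) by rewrite muln0.
by apply: contra Hj => /eqP E; apply/eqP/val_inj.
Qed.

Lemma ap_sum lo T K : lo + T.*2 < K ->
  \sum_(j < K) j.+1 * [&& lo <= j, j <= lo + T.*2 & ~~ odd (j + lo)] = T.+1 * (lo + T).+1.
Proof.
elim: T => [|T IH] H.
  rewrite mul1n addn0 -(@sum_pick K lo (fun j => j.+1)); last by move: H; rewrite addn0.
  apply: eq_bigr => j _; congr (_ * _).
  case: (eqVneq (nat_of_ord j) lo) => [->|ne]; first by rewrite leqnn addnn odd_double /= ?eqxx ?addn0 ?leqnn.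
  have : ~~ [&& lo <= j, j <= lo & ~~ odd (j + lo)] by apply/negP => /and3P [H1 H2 _]; move/eqP: ne; lia.
  by move/negbTE => ->.
have H' : lo + T.*2 < K by rewrite doubleS in H; lia.
have Hm : lo + T.+1.*2 < K by [].
transitivity (\sum_(j < K) (j.+1 * [&& lo <= j, j <= lo + T.*2 & ~~ odd (j + lo)]
      + j.+1 * (j == lo + T.+1.*2 :> nat))).
  apply: eq_bigr => j _; rewrite -mulnDr; congr (_ * _).
  have [E|E] := eqVneq (nat_of_ord j) (lo + T.+1.*2).
    rewrite E /=.
    have -> : lo + T.+1.*2 + lo = (lo + T.+1).*2 by rewrite doubleD; lia.
    rewrite odd_double leqnn leq_addr.
    have -> : (lo + T.+1.*2 <= lo + T.*2) = false by rewrite doubleS; lia.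
    by [].
  rewrite addn0.
  case: (ltnP (lo + T.*2) j) => Hj.
    have [E1|E1] := eqVneq (nat_of_ord j) (lo + T.*2).+1.
      rewrite E1 /=.
      have -> : lo + T.*2 + lo = (lo + T).*2 by rewrite doubleD; lia.
      by rewrite odd_double /= !andbF.
    have -> : (j <= lo + T.+1.*2) = false by move: E E1; rewrite doubleS; lia.
    by [].
  have -> : (j <= lo + T.+1.*2) = true by rewrite doubleS; lia.
  by [].
rewrite big_split /= IH // (sum_pick (fun j => j.+1)) //.
rewrite doubleS; lia.
Qed.
Lemma W_closed k l S : l <= k -> S <= k ->
  \sum_(j < k.+1) j.+1 * fusion k j S l = (minn l (k - S)).+1 * (minn S (k - l)).+1.
Proof.
move=> Hl HS.
pose lo := (l - S) + (S - l); pose T := minn (minn l S) (minn (k - l) (k - S)).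
have HT : lo + T.*2 < k.+1 by rewrite /lo /T -addnn; lia.
transitivity (T.+1 * (lo + T).+1); last first.
  have [H1|H1] := leqP l S; have [H2|H2] := leqP (l + S) k.
  - have -> : T = l by rewrite /T /lo; lia.
    have -> : minn l (k - S) = l by rewrite /T /lo; lia.
    have -> : minn S (k - l) = S by rewrite /T /lo; lia.
    have -> : lo + l = S by lia. by [].
  - have -> : T = k - S by rewrite /T /lo; lia.
    have -> : minn l (k - S) = k - S by rewrite /T /lo; lia.
    have -> : minn S (k - l) = k - l by rewrite /T /lo; lia.
    have -> : lo + (k - S) = k - l by lia. by [].
  - have -> : T = S by rewrite /T /lo; lia.
    have -> : minn l (k - S) = l by rewrite /T /lo; lia.
    have -> : minn S (k - l) = S by rewrite /T /lo; lia.
    have -> : lo + S = l by lia. by rewrite mulnC.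
  - have -> : T = k - l by rewrite /T /lo; lia.
    have -> : minn l (k - S) = k - S by rewrite /T /lo; lia.
    have -> : minn S (k - l) = k - l by rewrite /T /lo; lia.
    have -> : lo + (k - l) = k - S by lia. by rewrite mulnC.
rewrite -(ap_sum HT); apply: eq_bigr => j _; congr (_ * _).
have Hj : j <= k by case: j => /= j' Hj'; lia.
rewrite /fusion.
have -> : odd (l + j + S) = odd (j + lo) .
  have -> : l + j + S = j + lo + (minn l S) * 2 by rewrite /lo; lia.
  by rewrite oddD oddM andbF addbF.
case: (odd (j + lo)); rewrite /= ?andbF ?andbT //.
rewrite /lo /T -addnn.
congr (nat_of_bool _); apply/andP/andP; case=> ? ?; split; lia.
Qed.
Ltac bsplit := repeat match goal with
 | H : is_true (_ && _) |- _ => case/andP: H => ? ?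
 | |- is_true (_ && _) => apply/andP; split
 end.

Definition Mp k (x s A B C : nat) : bool := [&& x + A + B <= k, x + B + C <= k & C + s <= k].

Fixpoint h k n x s : nat :=
  if n is n'.+1 then
    \sum_(A < k.+1) \sum_(B < k.+1) \sum_(C < k.+1) Mp k x s A B C * h k n' A (B + maxn A C)
  else Mp k x s 0 0 0.

Lemma h_out k n x s : k < s -> h k n x s = 0.
Proof.
case: n => [|n] /= H.
  rewrite /Mp; have -> : (0 + s <= k) = false by lia.
  by rewrite !andbF.
apply: big1 => A _; apply: big1 => B _; apply: big1 => C _.
rewrite /Mp; have -> : (C + s <= k) = false by lia.
by rewrite !andbF.
Qed.

Lemma h_pick k n A m : h k n A m = \sum_(S < k.+1) h k n A S * (S == m :> nat).
Proof.
case: (leqP m k) => H; first by rewrite (@sum_pick k.+1 m (h k n A)).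
rewrite h_out // big1 // => S _.
have -> : (S == m :> nat) = false by case: S => /= S HS; apply/negbTE; lia.
by rewrite muln0.
Qed.

Lemma sum_pickB K S m (F : nat -> nat) : S < K ->
  \sum_(B < K) F B * (S == B + m :> nat) = (m <= S) * F (S - m).
Proof.
move=> HS; case: (leqP m S) => H.
  rewrite mul1n -(@sum_pick K (S - m) F); last by lia.
  apply: eq_bigr => B _; congr (_ * nat_of_bool _); apply/eqP/eqP; lia.
rewrite mul0n big1 // => B _.
have -> : (S == B + m :> nat) = false by apply/negbTE; lia.
by rewrite muln0.
Qed.

Lemma sum_le_narrow K S (F : nat -> nat) : S < K ->
  \sum_(i < K) (i <= S) * F i = \sum_(i < S.+1) F i.
Proof.
move=> HS; rewrite (big_ord_widen K F HS).
rewrite [RHS]big_mkcond; apply: eq_bigr => i _; rewrite ltnS; by case: (i <= S); rewrite ?mul1n ?mul0n.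
Qed.

Lemma Cnt k l A S : l <= k -> S <= k ->
  \sum_(a < l.+1) \sum_(B < k.+1) \sum_(C < k.+1) Mp k a l A B C * (S == B + maxn A C :> nat)
  = (A <= S) * ((minn l (k - S)).+1 * (minn S (k - l)).+1).
Proof.
move=> Hl HS.
under eq_bigr => a _ do rewrite exchange_big /=.
under eq_bigr => a _ do under eq_bigr => C _ do rewrite (@sum_pickB k.+1 S (maxn A C) (fun B => Mp k a l A B C)) //.
transitivity (\sum_(a < l.+1) \sum_(C < k.+1) ((A <= S) * (a <= k - S)) * (C <= minn S (k - l))).
  apply: eq_bigr => a _; apply: eq_bigr => C _.
  rewrite !mulnb /Mp; congr nat_of_bool; apply/idP/idP => H; bsplit; lia.
under eq_bigr => a _ do rewrite -big_distrr /=.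
rewrite -big_distrl /= -big_distrr /= sum_le_cnt sum_le_cnt.
by rewrite mulnA; congr (_ * _ * _); lia.
Qed.
Lemma partB k n (l : 'I_k.+1) : \sum_(a < l.+1) h k n a l = vpow (@vsum k) n.+1 l.
Proof.
elim: n l => [|n IH] l.
  rewrite /vpow /= /vsum /=.
  have Hl : l <= k by case: l => /= l' Hl'; lia.
  transitivity (\sum_(a < l.+1) 1); last by rewrite sum1_card card_ord.
  apply: eq_bigr => a _; rewrite /Mp; case: a => /= a Ha.
  have -> : a + 0 + 0 <= k by lia.
  by have -> : 0 + l <= k by lia.
have -> : vpow (@vsum k) n.+2 l = vmul (@vsum k) (vpow (@vsum k) n.+1) l by [].
have Hl : l <= k by case: l => /= l' Hl'; lia.
rewrite /=.
under eq_bigr => a _ do under eq_bigr => A _ do under eq_bigr => B _ do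
  under eq_bigr => C _ do rewrite (h_pick k n A) big_distrr.
under eq_bigr => a _ do under eq_bigr => A _ do under eq_bigr => B _ do rewrite exchange_big.
under eq_bigr => a _ do under eq_bigr => A _ do rewrite exchange_big.
under eq_bigr => a _ do rewrite exchange_big.
rewrite exchange_big.
under eq_bigr => S _ do rewrite exchange_big.
transitivity (\sum_(S < k.+1) \sum_(A < k.+1) h k n A S *
   ((A <= S) * ((minn l (k - S)).+1 * (minn S (k - l)).+1))).
  apply: eq_bigr => S _; apply: eq_bigr => A _.
  have HS : S <= k by case: S => /= S' HS'; lia.
  rewrite -(Cnt A Hl HS) big_distrr; apply: eq_bigr => a _.
  rewrite big_distrr; apply: eq_bigr => B _.
  rewrite big_distrr; apply: eq_bigr => C _.
  exact: mulnCA.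
rewrite /vmul /vsum [RHS]exchange_big /=.
apply: eq_bigr => S _.
have HS : S <= k by case: S => /= S' HS'; lia.
transitivity (((minn l (k - S)).+1 * (minn S (k - l)).+1) * \sum_(A < k.+1) (A <= S) * h k n A S).
  rewrite big_distrr; apply: eq_bigr => A _.
  rewrite /=; nia.
rewrite (@sum_le_narrow k.+1 S (fun A => h k n A S)) // IH -(W_closed Hl HS) big_distrl /=.
by apply: eq_bigr => j _; rewrite mulnAC.
Qed.
Definition fcons (X : finType) N (x : X) (g : {ffun 'I_N -> X}) : {ffun 'I_N.+1 -> X} :=
  [ffun i => if unlift ord0 i is Some j then g j else x].
Definition ftail (X : finType) N (f : {ffun 'I_N.+1 -> X}) : {ffun 'I_N -> X} :=
  [ffun j => f (lift ord0 j)].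

Lemma sum_ffunS (X : finType) N (F : {ffun 'I_N.+1 -> X} -> nat) :
  \sum_f F f = \sum_(x : X) \sum_(g : {ffun 'I_N -> X}) F (fcons x g).
Proof.
rewrite pair_big /=.
rewrite (reindex (fun p : X * {ffun 'I_N -> X} => fcons p.1 p.2)) //=.
exists (fun f : {ffun 'I_N.+1 -> X} => (f ord0, ftail f)) => [[x g] _ | f _] /=.
  congr pair; first by rewrite ffunE unlift_none.
  by apply/ffunP => j; rewrite !ffunE liftK.
apply/ffunP => i; rewrite ffunE; case: unliftP => [j ->|->] //.
by rewrite ffunE.
Qed.

Lemma ext_ord k N (f : expvec k N) (i : 'I_N) : ext f i = f i.
Proof. by rewrite /ext valK. Qed.

Lemma ext_ge k N (f : expvec k N) i : N <= i -> ext f i = 0.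
Proof. by move=> H; rewrite /ext insubF // ltnNge H. Qed.

Lemma ext_cons0 k N (x : 'I_k.+1) (g : expvec k N) : ext (fcons x g) 0 = x.
Proof.
have -> : 0 = nat_of_ord (ord0 : 'I_N.+1) by [].
by rewrite ext_ord ffunE unlift_none.
Qed.

Lemma ext_consS k N (x : 'I_k.+1) (g : expvec k N) i : ext (fcons x g) i.+1 = ext g i.
Proof.
case: (ltnP i N) => H.
  have -> : i.+1 = nat_of_ord (lift ord0 (Ordinal H)) by [].
  by rewrite ext_ord ffunE liftK -(ext_ord g (Ordinal H)).
by rewrite !ext_ge.
Qed.
Lemma sum_prod3 (X Y Z : finType) (F : X * Y * Z -> nat) :
  \sum_m F m = \sum_(x : X) \sum_(y : Y) \sum_(z : Z) F (x, y, z).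
Proof.
rewrite pair_big /= pair_big /=.
by apply: eq_bigr => -[[x y] z].
Qed.

Lemma sum_mon k N (G : monomial k N -> nat) :
  \sum_(m : monomial k N) G m = \sum_(x : expvec k N) \sum_(y : expvec k N) \sum_(z : expvec k N) G (x, y, z).
Proof. exact: sum_prod3. Qed.

Lemma sum_monS k N (F : monomial k N.+1 -> nat) :
  \sum_m F m = \sum_(A : 'I_k.+1) \sum_(B : 'I_k.+1) \sum_(C : 'I_k.+1)
     \sum_(m : monomial k N) F (fcons A m.1.1, fcons B m.1.2, fcons C m.2).
Proof.
rewrite sum_mon sum_ffunS.
transitivity (\sum_(A : 'I_k.+1) \sum_(ga : expvec k N) \sum_(B : 'I_k.+1) \sum_(gb : expvec k N)
   \sum_(C : 'I_k.+1) \sum_(gc : expvec k N) F (fcons A ga, fcons B gb, fcons C gc)).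
  apply: eq_bigr => A _; apply: eq_bigr => ga _; rewrite sum_ffunS.
  apply: eq_bigr => B _; apply: eq_bigr => gb _; by rewrite sum_ffunS.
apply: eq_bigr => A _; rewrite exchange_big; apply: eq_bigr => B _.
transitivity (\sum_(ga : expvec k N) \sum_(C : 'I_k.+1) \sum_(gb : expvec k N)
   \sum_(gc : expvec k N) F (fcons A ga, fcons B gb, fcons C gc)).
  by apply: eq_bigr => ga _; rewrite exchange_big.
rewrite exchange_big; apply: eq_bigr => C _.
by rewrite sum_mon.
Qed.

Lemma forall_iota n (P : nat -> bool) : [forall i : 'I_n, P i] = all P (iota 0 n).
Proof.
apply/forallP/allP => H i.
  by rewrite mem_iota add0n => Hi; exact: (H (Ordinal Hi)).
by apply: H; rewrite mem_iota add0n ltn_ord.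
Qed.

Definition chain k (x s : nat) (a b c : nat -> nat) n : bool :=
  Mp k x s (a 0) (b 0) (c 0) &&
  all (fun i => Mp k (a i) (b i + maxn (a i) (c i)) (a i.+1) (b i.+1) (c i.+1)) (iota 0 n).

Lemma chain_ext k x s a b c a' b' c' n :
  a =1 a' -> b =1 b' -> c =1 c' -> chain k x s a b c n = chain k x s a' b' c' n.
Proof.
move=> Ha Hb Hc; rewrite /chain !Ha !Hb !Hc; congr (_ && _).
by apply: eq_all => i; rewrite !Ha !Hb !Hc.
Qed.

Lemma iotaS0 n : iota 0 n.+1 = 0 :: map S (iota 0 n).
Proof. by rewrite /= -(iotaDl 1). Qed.

Lemma ehf_gen k (l : nat) n (a b c : nat -> nat) : l <= k ->
 [&& b 0 == 0, c 0 == 0, [forall i : 'I_n.+1, a i + a i.+1 + b i.+1 <= k],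
     [forall i : 'I_n.+1, a i + b i.+1 + c i.+1 <= k],
     [forall i : 'I_n.+1, (0 < i) ==> (a i + b i + c i.+1 <= k)],
     [forall i : 'I_n.+1, (0 < i) ==> (b i + c i + c i.+1 <= k)],
     a 0 <= l & c 1 <= k - l]
 = [&& b 0 == 0, c 0 == 0, a 0 <= l &
       chain k (a 0) l (fun i => a i.+1) (fun i => b i.+1) (fun i => c i.+1) n].
Proof.
move=> Hl.
rewrite (@forall_iota n.+1 (fun i => a i + a i.+1 + b i.+1 <= k)).
rewrite (@forall_iota n.+1 (fun i => a i + b i.+1 + c i.+1 <= k)).
rewrite (@forall_iota n.+1 (fun i => (0 < i) ==> (a i + b i + c i.+1 <= k))).
rewrite (@forall_iota n.+1 (fun i => (0 < i) ==> (b i + c i + c i.+1 <= k))).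
rewrite iotaS0 /= !all_map /chain.
set s := iota 0 n.
have -> : all (fun i => Mp k (a i.+1) (b i.+1 + maxn (a i.+1) (c i.+1)) (a i.+2) (b i.+2) (c i.+2)) s
  = [&& all (preim S (fun i => a i + a i.+1 + b i.+1 <= k)) s,
        all (preim S (fun i => a i + b i.+1 + c i.+1 <= k)) s,
        all (preim S (fun i => (0 < i) ==> (a i + b i + c i.+1 <= k))) s &
        all (preim S (fun i => (0 < i) ==> (b i + c i + c i.+1 <= k))) s].
  rewrite -!all_predI; apply: eq_all => i /=; rewrite /Mp.
  apply/idP/idP => H; bsplit; lia.
rewrite /Mp.
apply/idP/idP => H; bsplit; try done; lia.
Qed.
Lemma chain_cons k x s a b c n :
  chain k x s a b c n.+1 = Mp k x s (a 0) (b 0) (c 0) &&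
    chain k (a 0) (b 0 + maxn (a 0) (c 0)) (fun i => a i.+1) (fun i => b i.+1) (fun i => c i.+1) n.
Proof. by rewrite /chain iotaS0 /= all_map. Qed.

Lemma Hc_h k n x s :
  \sum_(m : monomial k n) chain k x s (ext m.1.1) (ext m.1.2) (ext m.2) n = h k n x s.
Proof.
elim: n x s => [|n IH] x s.
  rewrite /=.
  transitivity (\sum_(m : monomial k 0) (Mp k x s 0 0 0 : nat)).
    by apply: eq_bigr => m _; rewrite /chain !ext_ge //= andbT.
  rewrite sum_nat_const /monomial /expvec !card_prod !card_ffun !card_ord /=.
  by rewrite mul1n.
rewrite sum_monS /=; apply: eq_bigr => A _; apply: eq_bigr => B _; apply: eq_bigr => C _.
rewrite -IH big_distrr /=; apply: eq_bigr => m _.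
rewrite chain_cons !ext_cons0 -mulnb; congr (_ * nat_of_bool _).
by apply: chain_ext => i; rewrite ext_consS.
Qed.

Lemma card_sum (T : finType) (P : pred T) : #|[pred m | P m]| = \sum_m P m.
Proof.
rewrite -sum1_card big_mkcond; apply: eq_bigr => m _; rewrite inE.
by case: (P m).
Qed.

Lemma p_ehf_h k (l : 'I_k.+1) N : p_ehf k l N.+1 = \sum_(a < l.+1) h k N a l.
Proof.
have Hl : l <= k by case: l => /= l' Hl'; lia.
rewrite /p_ehf card_sum sum_monS.
rewrite -(@sum_le_narrow k.+1 l (fun A => h k N A l)) //.
apply: eq_bigr => A _.
transitivity (\sum_(B < k.+1) \sum_(C < k.+1) ((A <= l) * h k N A l) * (B == 0 :> nat) * (C == 0 :> nat)).
  apply: eq_bigr => B _; apply: eq_bigr => C _.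
  transitivity (\sum_(m : monomial k N) ((B == 0 :> nat) && (C == 0 :> nat) && (A <= l)) *
       chain k A l (ext m.1.1) (ext m.1.2) (ext m.2) N).
    apply: eq_bigr => m _.
    rewrite /is_ehf /= ehf_gen // !ext_cons0 mulnb -!andbA.
    by rewrite (@chain_ext k A l _ _ _ (ext m.1.1) (ext m.1.2) (ext m.2)) // => i; rewrite ext_consS.
  rewrite -big_distrr /= Hc_h -!mulnb; nia.
transitivity (\sum_(B < k.+1) ((A <= l) * h k N A l) * (B == 0 :> nat)).
  apply: eq_bigr => B _.
  by rewrite (@sum_pick k.+1 0 (fun _ => (A <= l) * h k N A l * (B == 0 :> nat))).
by rewrite (@sum_pick k.+1 0 (fun _ => (A <= l) * h k N A l)).
Qed.

Theorem proposition3p2p3 (k : nat) (l : 'I_k.+1) (N : nat) :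
  0 < k -> 1 <= N -> p_ehf k l N = d0 k N l.
Proof.
move=> _; case: N => [//|N] _.
by rewrite p_ehf_h partB.
Qed.
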